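(* Let $\mathcal{H}$ be a hypertree, $T$ a host tree of $\mathcal{H}$, and $u,v$ two different vertices of $\mathcal{H}$. Then $uv$ is an edge of some host tree of $\mathcal{H}$ if and only if there exists an edge $e$ of the path $T[u,v]$ such that $I_\mathcal{H}(uv)=I_\mathcal{H}(e)$.
   Context: A hypergraph $\mathcal{H}$ has a finite vertex set $V(\mathcal{H})$ and a finite family of nonempty subsets (edges). A host tree is a tree on $V(\mathcal{H})$ in which every edge induces a connected subgraph; a hypertree is a hypergraph with a host tree. For $V'\subseteq V(\mathcal{H})$, $I_\mathcal{H}(V')$ is the intersection of all edges of $\mathcal{H}$ containing $V'$, or $V(\mathcal{H})$ if none does; for a pair, $I_\mathcal{H}(xy)=I_\mathcal{H}(\{x,y\})$, and for a tree edge $e=xy$, $I_\mathcal{H}(e)=I_\mathcal{H}(\{x,y\})$. $T[u,v]$ is the path in $T$ from $u$ to $v$. *)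

(* Defs.v *)
From mathcomp Require Import all_boot.
Set Implicit Arguments. Unset Strict Implicit. Unset Printing Implicit Defensive.

(* A hypergraph on the finite vertex set V (the whole type) is a finite
   family (sequence, repetitions allowed) of nonempty subsets. *)
Definition hypergraph (V : finType) (H : seq {set V}) : Prop :=
  forall e, e \in H -> e != set0.

Definition upath (V : finType) (G : rel V) (x : V) (p : seq V) : bool :=
  path G x p && uniq (x :: p).

Definition is_tree (V : finType) (G : rel V) : Prop :=
  symmetric G /\ irreflexive G /\
  forall x y : V, exists! p : seq V, upath G x p /\ last x p = y.

Definition induces_connected (V : finType) (G : rel V) (S : {set V}) : Prop :=
  forall x y, x \in S -> y \in S ->
    exists p : seq V, [/\ path G x p, last x p = y & all (fun z => z \in S) p].

Definition host_tree (V : finType) (H : seq {set V}) (T : rel V) : Prop :=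
  is_tree T /\ forall e, e \in H -> induces_connected T e.

Definition hypertree (V : finType) (H : seq {set V}) : Prop :=
  hypergraph H /\ exists T, host_tree H T.

(* I_H(A): intersection of all edges containing A; the whole vertex set
   (setT, the empty intersection) if there is none. *)
Definition I_H (V : finType) (H : seq {set V}) (A : {set V}) : {set V} :=
  \bigcap_(e <- H | A \subset e) e.

(* Main.v *)
Require Import Defs.
From mathcomp Require Import all_boot.
Set Implicit Arguments. Unset Strict Implicit. Unset Printing Implicit Defensive.

Definition rmE (V : finType) (G : rel V) (a b : V) : rel V :=
  fun c d => G c d && ~~ (((c == a) && (d == b)) || ((c == b) && (d == a))).
Definition addE (V : finType) (G : rel V) (a b : V) : rel V :=
  fun c d => [|| G c d, (c == a) && (d == b) | (c == b) && (d == a)].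
Definition restr (V : finType) (G : rel V) (S : {set V}) : rel V :=
  fun c d => [&& G c d, c \in S & d \in S].

Lemma rm_sub (V : finType) (G : rel V) a b : subrel (rmE G a b) G.
Proof. by move=> c d /andP[]. Qed.

Lemma add_sub (V : finType) (G : rel V) a b : subrel G (addE G a b).
Proof. by move=> c d H; rewrite /addE H. Qed.

Lemma rm_sym (V : finType) (G : rel V) a b : symmetric G -> symmetric (rmE G a b).
Proof.
move=> sG c d; rewrite /rmE sG; congr andb.
by case: (c == a) (c == b) (d == a) (d == b) => [] [] [] [].
Qed.

Lemma add_sym (V : finType) (G : rel V) a b : symmetric G -> symmetric (addE G a b).
Proof.
move=> sG c d; rewrite /addE sG; congr orb.
by case: (c == a) (c == b) (d == a) (d == b) => [] [] [] [].
Qed.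

Lemma restr_sym (V : finType) (G : rel V) S : symmetric G -> symmetric (restr G S).
Proof. by move=> sG c d; rewrite /restr sG; congr andb; exact: andbC. Qed.

Lemma path_rmA (V : finType) (G : rel V) a b c q :
  path G c q -> a \notin c :: q -> path (rmE G a b) c q.
Proof.
move=> Hp Ha; apply: (@sub_in_path _ (predC1 a) G) Hp.
  move=> w z /= Hw Hz H; rewrite /rmE H /=.
  by rewrite (negbTE Hw) (negbTE Hz) andbF.
apply/allP => w Hw /=; apply/eqP => E; move: Ha; by rewrite -E Hw.
Qed.

Lemma path_rmB (V : finType) (G : rel V) a b c q :
  path G c q -> b \notin c :: q -> path (rmE G a b) c q.
Proof.
move=> Hp Ha; apply: (@sub_in_path _ (predC1 b) G) Hp.
  move=> w z /= Hw Hz H; rewrite /rmE H /=.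
  by rewrite (negbTE Hw) (negbTE Hz) andbF.
apply/allP => w Hw /=; apply/eqP => E; move: Ha; by rewrite -E Hw.
Qed.

Lemma tree_uniq (V : finType) (G : rel V) c d q r :
  is_tree G -> upath G c q -> last c q = d -> upath G c r -> last c r = d -> q = r.
Proof.
move=> [_ [_ Ht]] Hq Hlq Hr Hlr.
have [p [_ Hu]] := Ht c d.
by rewrite -(Hu q (conj Hq Hlq)) (Hu r (conj Hr Hlr)).
Qed.

Lemma tree_cut (V : finType) (G : rel V) a b :
  is_tree G -> G a b -> ~~ connect (rmE G a b) a b.
Proof.
move=> Ht Gab; apply/negP => /connectP [q Hq].
case: (shortenP Hq) => q' Hq' Hu _ Hl.
have Hab : a != b.
  apply/eqP => E; move: Gab; rewrite E; by have [_ [-> _]] := Ht.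
have E : q' = [:: b].
  apply: (tree_uniq Ht _ (esym Hl)) => //.
  - by rewrite /upath Hu (sub_path (@rm_sub _ G a b) Hq').
  - by rewrite /upath /= Gab /= inE Hab.
move: Hq'; rewrite E /= /rmE !eqxx /=. by rewrite andbF.
Qed.

Lemma tree_two_sides (V : finType) (G : rel V) a b z :
  is_tree G -> connect (rmE G a b) z a || connect (rmE G a b) z b.
Proof.
move=> [_ [_ Ht]]; have [p [[Hp Hl] _]] := Ht z a.
move: Hp; rewrite /upath => /andP[Hp _].
suff: [|| connect (rmE G a b) z (last z p), connect (rmE G a b) z a
        | connect (rmE G a b) z b].
  by rewrite Hl; case/or3P => ->; rewrite ?orbT.
elim/last_ind: p Hp {Hl} => [|q w IH]; first by rewrite /= connect0.
rewrite rcons_path last_rcons => /andP[Hq Hw].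
case/or3P: (IH Hq) => [Hc|->|->]; rewrite ?orbT //.
case Hr: (rmE G a b (last z q) w).
  by rewrite (connect_trans Hc (connect1 Hr)).
move: Hr; rewrite /rmE Hw /= => /negbFE /orP[] /andP[/eqP E _]; move: Hc; rewrite E => ->;
  by rewrite ?orbT.
Qed.

Lemma host_path_in (V : finType) (G : rel V) (S : {set V}) c d q :
  is_tree G -> induces_connected G S -> c \in S -> d \in S ->
  upath G c q -> last c q = d -> {subset q <= S}.
Proof.
move=> Ht Hc Hcs Hds Hq Hl.
have [r [Hr Hlr Har]] := Hc c d Hcs Hds.
move: Hlr; case: (shortenP Hr) => r' Hr' Hu Hsub Hl'.
have E : r' = q by apply: (tree_uniq Ht _ Hl' Hq Hl); rewrite /upath Hr' Hu.
move=> z Hz; rewrite -E in Hz; have := Hsub z Hz.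
by move/(allP Har).
Qed.

Lemma crossing (V : finType) (G : rel V) (P : pred V) c q :
  path G c q -> ~~ P c -> P (last c q) ->
  exists x y, [/\ G x y, ~~ P x, P y & infix [:: x; y] (c :: q)].
Proof.
elim: q c => [|w q IH] c /=; first by move=> _ /negbTE ->.
move=> /andP[Gcw Hp] Hc Hl.
case Pw: (P w).
  by exists c, w; split => //; exact: (prefix_infix [:: c; w] q).
have [x [y [Gxy Px Py Hin]]] := IH w Hp (negbT Pw) Hl.
exists x, y; split => //; exact: (infix_trans Hin (infix_cons _ _)).
Qed.

Lemma infix_path (V : finType) (G : rel V) c q x y :
  path G c q -> infix [:: x; y] (c :: q) -> G x y.
Proof.
move=> Hp Hin.
have : sorted G [:: x; y] by apply: (infix_sorted Hin).
by rewrite /= andbT.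
Qed.

Lemma mem_bigcap (V : finType) (H : seq {set V}) (A : {set V}) z :
  (z \in I_H H A) = all (fun e : {set V} => (A \subset e) ==> (z \in e)) H.
Proof.
rewrite /I_H; elim: H => [|e H IH]; first by rewrite big_nil in_setT.
rewrite big_cons /=; case: ifP => _; by rewrite ?inE IH.
Qed.

Lemma I_H_eq (V : finType) (H : seq {set V}) (A B : {set V}) :
  (forall e, e \in H -> (A \subset e) = (B \subset e)) -> I_H H A = I_H H B.
Proof.
move=> HE; apply/setP => z; rewrite !mem_bigcap.
by apply: eq_in_all => e He; rewrite /= HE.
Qed.

Lemma sub2 (V : finType) (a b : V) (e : {set V}) :
  ([set a; b] \subset e) = (a \in e) && (b \in e).
Proof. by rewrite subUset !sub1set. Qed.

Lemma path_restr_all (V : finType) (G : rel V) S c q :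
  path (restr G S) c q -> all (fun z => z \in S) q.
Proof.
elim: q c => [|w q IH] c //= /andP[/and3P[_ _ ->] Hp]; exact: IH Hp.
Qed.

Lemma ic_restr (V : finType) (G : rel V) (S : {set V}) :
  induces_connected G S <-> (forall c d, c \in S -> d \in S -> connect (restr G S) c d).
Proof.
split.
  move=> Hc c d Hcs Hds; have [q [Hp Hl Ha]] := Hc c d Hcs Hds.
  apply/connectP; exists q => //.
  apply: (@sub_in_path _ (fun z => z \in S) G) Hp.
    by move=> w z Hw Hz Gwz; rewrite /restr Gwz Hw Hz.
  by rewrite /= Hcs.
move=> Hc c d Hcs Hds; have /connectP [q Hp Hl] := Hc c d Hcs Hds.
exists q; split => //; last exact: path_restr_all Hp.
by apply: sub_path Hp => w z /and3P[].
Qed.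

Lemma decomp (V : finType) (G0 : rel V) u v c q :
  uniq (c :: q) -> path (addE G0 u v) c q ->
  path G0 c q \/ exists q1 w q2, [/\ q = q1 ++ w :: q2, path G0 c q1, path G0 w q2 &
     ((last c q1 == u) && (w == v)) || ((last c q1 == v) && (w == u))].
Proof.
elim: q c => [|w q IH] c; first by left.
rewrite [uniq _]/= => /andP[Hc Hu] /= /andP[Hcw Hp].
have := IH w Hu Hp.
case G0cw: (G0 c w).
  case=> [H1|[q1 [w' [q2 [E H1 H2 H3]]]]]; first by left; apply/andP; split.
  right; exists (w :: q1), w', q2; split => //=; first by rewrite E.
  all: try by apply/andP; split.
move: Hcw; rewrite /addE G0cw /= => Huv.
case=> [H1|[q1 [w' [q2 [E H1 H2 H3]]]]].
  by right; exists [::], w, q; split.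
exfalso; move: Hc; apply/negP/negPn.
have Hl : last w q1 \in w :: q by rewrite E -cat_cons mem_cat mem_last.
have Hw' : w' \in w :: q by rewrite E inE mem_cat inE eqxx !orbT.
by case/orP: Huv => /andP[/eqP -> _]; case/orP: H3 => /andP[/eqP E1 /eqP E2];
  rewrite -?E1 -?E2.
Qed.

Lemma swap_tree (V : finType) (G : rel V) a b u v :
  is_tree G -> G a b -> connect (rmE G a b) u a -> connect (rmE G a b) v b ->
  is_tree (addE (rmE G a b) u v).
Proof.
move=> Ht Gab Hua Hvb.
have [sG [iG _]] := Ht.
have Hcut := tree_cut Ht Gab.
set G0 := rmE G a b in Hua Hvb Hcut *.
have sG0 : symmetric G0 := rm_sym a b sG.
have cs : connect_sym G0 := sym_connect_sym sG0.
have Hau : connect G0 a u by rewrite cs.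
have Hbv : connect G0 b v by rewrite cs.
have nuv : ~~ connect G0 u v.
  apply: contra Hcut => Huv.
  exact: (connect_trans Hau (connect_trans Huv Hvb)).
have nvu : ~~ connect G0 v u by rewrite cs.
have Huv : u != v by apply: contra nuv => /eqP ->; exact: connect0.
set G' := addE G0 u v.
have sub0 : subrel G0 G' := @add_sub _ G0 u v.
have Hlast : forall c q, path G0 c q -> connect G0 c (last c q).
  by move=> c q Hp; apply/connectP; exists q.
have simple : forall c d, connect G0 c d ->
    exists q, [/\ path G0 c q, uniq (c :: q) & last c q = d].
  move=> c d /connectP [q Hq ->]; case: (shortenP Hq) => q' Hq' Hu _; by exists q'.
have upG : forall c q, path G0 c q -> uniq (c :: q) -> upath G c q.
  by move=> c q P U; rewrite /upath U (sub_path (@rm_sub _ G a b) P).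
have noncross : forall m w, ((m == u) && (w == v)) || ((m == v) && (w == u)) ->
    ~~ connect G0 m w.
  by move=> m w /orP[]/andP[/eqP-> /eqP->].
have ex2 : forall m w c d, G' m w -> ~~ connect G0 m w -> connect G0 c m ->
    connect G0 w d -> exists p, upath G' c p /\ last c p = d.
  move=> m w c d Gmw Nmw Hcm Hwd.
  have [s1 [P1 U1 L1]] := simple _ _ Hcm.
  have [s2 [P2 U2 L2]] := simple _ _ Hwd.
  exists (s1 ++ w :: s2); split; last by rewrite last_cat L1.
  rewrite /upath; apply/andP; split.
    by rewrite cat_path L1 /= Gmw (sub_path sub0 P1) (sub_path sub0 P2).
  rewrite -cat_cons cat_uniq; apply/and3P; split => //.
  apply/hasPn => z Hz; apply/negP => Hz1.
  have Ccz := path_connect P1 Hz1.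
  have Cwz := path_connect P2 Hz.
  apply: (negP Nmw).
  have Hmc : connect G0 m c by rewrite cs.
  have Hzw : connect G0 z w by rewrite cs.
  exact: connect_trans Hmc (connect_trans Ccz Hzw).
split; first exact: add_sym.
split.
  move=> c; rewrite /G' /addE /G0 /rmE iG /=.
  apply/negbTE; apply/negP => /orP[]/andP[/eqP E1 /eqP E2]; move: Huv;
    by rewrite -E1 -E2 eqxx.
move=> c d.
have [p [Hp Hl]] : exists p, upath G' c p /\ last c p = d.
  case Ccd: (connect G0 c d).
    have [q [P U L]] := simple _ _ Ccd.
    by exists q; rewrite /upath (sub_path sub0 P) U.
  have Hc : connect G0 c u || connect G0 c v.
    case/orP: (tree_two_sides a b c Ht) => H.
      by rewrite (connect_trans H Hau).
    by rewrite (connect_trans H Hbv) orbT.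
  have Hd : connect G0 d u || connect G0 d v.
    case/orP: (tree_two_sides a b d Ht) => H.
      by rewrite (connect_trans H Hau).
    by rewrite (connect_trans H Hbv) orbT.
  have G'uv : G' u v by rewrite /G' /addE !eqxx ?orbT.
  have G'vu : G' v u by rewrite /G' /addE !eqxx ?andbT ?orbT.
  case/orP: Hc => Hc; case/orP: Hd => Hd.
  - by move: Ccd; rewrite (connect_trans Hc (_ : connect G0 u d)) // cs.
  - by apply: (ex2 u v) => //; rewrite cs.
  - by apply: (ex2 v u) => //; rewrite cs.
  - by move: Ccd; rewrite (connect_trans Hc (_ : connect G0 v d)) // cs.
exists p; split => // r [Hr Hlr].
move: Hp Hr => /andP[Pq Uq] /andP[Pr Ur].
have key : forall q1 q2 r1 r2 w, uniq (c :: q1 ++ w :: q2) -> uniq (c :: r1 ++ w :: r2) ->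
    path G0 c q1 -> path G0 c r1 -> path G0 w q2 -> path G0 w r2 ->
    last c q1 = last c r1 -> last w q2 = last w r2 -> q1 ++ w :: q2 = r1 ++ w :: r2.
  move=> q1 q2 r1 r2 w Uq1 Ur1 Q1 R1 Q2 R2 L1 L2.
  move: Uq1 Ur1; rewrite -!cat_cons !cat_uniq => /and3P[U1 _ U2] /and3P[V1 _ V2].
  have E1 : q1 = r1 by apply: (tree_uniq Ht (upG _ _ Q1 U1) L1 (upG _ _ R1 V1)).
  have E2 : q2 = r2 by apply: (tree_uniq Ht (upG _ _ Q2 U2) L2 (upG _ _ R2 V2)).
  by rewrite E1 E2.
case: (decomp Uq Pq) => [Q0|[q1 [w [q2 [Eq Q1 Q2 Qw]]]]];
  case: (decomp Ur Pr) => [R0|[r1 [w' [r2 [Er R1 R2 Rw]]]]].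
- by apply: (tree_uniq Ht (upG _ _ Q0 Uq) Hl (upG _ _ R0 Ur)).
- exfalso; have Ccd := Hlast _ _ Q0; rewrite Hl in Ccd.
  have Cw'd := Hlast _ _ R2.
  move: Hlr; rewrite Er last_cat /= => Hlr; rewrite Hlr in Cw'd.
  have Ccm := Hlast _ _ R1.
  apply: (negP (noncross _ _ Rw)).
  have Hmc : connect G0 (last c r1) c by rewrite cs.
  have Hdw : connect G0 d w' by rewrite cs.
  exact: connect_trans Hmc (connect_trans Ccd Hdw).
- exfalso; have Ccd := Hlast _ _ R0; rewrite Hlr in Ccd.
  have Cw'd := Hlast _ _ Q2.
  move: Hl; rewrite Eq last_cat /= => Hl; rewrite Hl in Cw'd.
  have Ccm := Hlast _ _ Q1.
  apply: (negP (noncross _ _ Qw)).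
  have Hmc : connect G0 (last c q1) c by rewrite cs.
  have Hdw : connect G0 d w by rewrite cs.
  exact: connect_trans Hmc (connect_trans Ccd Hdw).
- move: Hl Hlr; rewrite Eq Er !last_cat /= => Hl Hlr.
  have Cm := Hlast _ _ Q1; have Cm' := Hlast _ _ R1.
  have Cmm : connect G0 (last c q1) (last c r1).
    by apply: connect_trans Cm'; rewrite cs.
  rewrite Eq Er in Uq Ur *.
  case/orP: Qw => /andP[/eqP Em /eqP Ew]; case/orP: Rw => /andP[/eqP Em' /eqP Ew'];
    rewrite Em Em' in Cmm; rewrite ?Ew ?Ew' in Uq Ur Q2 R2 Hl Hlr *.
  + by apply: key => //; rewrite ?Em ?Em' ?Hl ?Hlr.
  + by rewrite Cmm in nuv.
  + by rewrite Cmm in nvu.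
  + by apply: key => //; rewrite ?Em ?Em' ?Hl ?Hlr.
Qed.

Lemma split_simple (V : finType) (G : rel V) c q s s' x y :
  uniq (c :: q) -> path G c q -> c :: q = s ++ x :: y :: s' ->
  (exists r1, [/\ path (rmE G x y) c r1, last c r1 = x & {subset c :: r1 <= c :: q}]) /\
  (exists r2, [/\ path (rmE G x y) y r2, last y r2 = last c q & {subset y :: r2 <= c :: q}]).
Proof.
move=> U P.
case: s => [|c' s0] /= [Ec Eq]; subst.
  split.
    exists [::]; split => // z; rewrite inE => /eqP ->; exact: mem_head.
  exists s'; split => //.
    move: P U => /andP[_ P2] /andP[Hx _]; exact: path_rmA P2 Hx.
  by move=> z Hz; rewrite inE Hz orbT.
have U' := U.
move: U'; rewrite -cat_cons cat_uniq => /and3P[_ _ Uxy].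
split.
  exists (rcons s0 x); split; last 2 first.
  - by rewrite last_rcons.
  - by move=> z; rewrite !(inE, mem_rcons, mem_cat) => /or3P[] ->; rewrite ?orbT.
  apply: path_rmB.
    move: P; rewrite cat_path => /andP[P1 /= /andP[Gx _]].
    by rewrite rcons_path P1 Gx.
  move: U; rewrite -cat_cons -[x :: y :: s']/([:: x] ++ y :: s') catA cat_uniq.
  case/and3P=> _ Hn _; apply: contra Hn => Hy; apply/hasP; exists y; first exact: mem_head.
  by rewrite cats1.
exists s'; split.
- move: P; rewrite cat_path => /andP[_ /= /andP[_ /andP[_ P2]]].
  have Hx : x \notin y :: s' by case/andP: Uxy.
  exact: path_rmA P2 Hx.
- by rewrite last_cat.
- move=> z Hz; rewrite !inE mem_cat !inE; move: Hz; rewrite inE => /orP[] ->; by rewrite ?orbT.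
Qed.

Theorem mainTheorem11 (V : finType) (H : seq {set V}) (T : rel V) (u v : V) :
  hypertree H -> host_tree H T -> u != v ->
  (exists T' : rel V, host_tree H T' /\ T' u v) <->
  (exists p : seq V, [/\ upath T u p, last u p = v &
     exists x y : V, infix [:: x; y] (u :: p) /\
       I_H H [set u; v] = I_H H [set x; y]]).
Proof.
move=> _ HT Huv; have [Ht HTe] := HT; have [sT _] := Ht.
split.
- move=> [T' [[Ht' HT'e] T'uv]].
  have [_ [_ Htp]] := Ht; have [p [[Hp Hl] _]] := Htp u v.
  exists p; split => //.
  pose P := fun z => connect (rmE T' u v) z v.
  have Pu : ~~ P u := tree_cut Ht' T'uv.
  have Pv : P (last u p) by rewrite Hl /P connect0.
  have /andP[Hpp _] := Hp.
  have [x [y [Txy Px Py Hin]]] := crossing Hpp Pu Pv.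
  exists x, y; split => //.
  apply: I_H_eq => e He; rewrite !sub2; apply/andP/andP => [[Hu Hv]|[Hx Hy]].
    have Hsub := host_path_in Ht (HTe e He) Hu Hv Hp Hl.
    have Hm : forall z, z \in u :: p -> z \in e.
      by move=> z; rewrite inE => /orP[/eqP->|/Hsub].
    by split; apply: Hm; apply: (mem_infix Hin); rewrite !inE eqxx ?orbT.
  have [r [Pr Lr Ar]] := HT'e e He x y Hx Hy.
  have Py' : P (last x r) by rewrite Lr.
  have [c [d [T'cd Pc Pd Hin2]]] := crossing Pr Px Py'.
  have Hm : forall z, z \in x :: r -> z \in e.
    move=> z; rewrite inE => /orP[/eqP->//|Hz]; exact: (allP Ar z Hz).
  have Hce : c \in e by apply: Hm; apply: (mem_infix Hin2); rewrite !inE eqxx.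
  have Hde : d \in e by apply: Hm; apply: (mem_infix Hin2); rewrite !inE eqxx ?orbT.
  case Hr: (rmE T' u v c d).
    by move: Pc; rewrite /P (connect_trans (connect1 Hr) Pd).
  move: Hr; rewrite /rmE T'cd /= => /negbFE /orP[]/andP[/eqP Ec /eqP Ed];
    by rewrite -Ec -Ed.
- move=> [p [Hp Hl [x [y [Hin HI]]]]].
  have Hxy : forall e, e \in H -> x \in e -> y \in e -> (u \in e) && (v \in e).
    move=> e He Hx Hy.
    have Hu : u \in I_H H [set u; v].
      by rewrite mem_bigcap; apply/allP => e' _; apply/implyP; rewrite sub2 => /andP[].
    have Hv : v \in I_H H [set u; v].
      by rewrite mem_bigcap; apply/allP => e' _; apply/implyP; rewrite sub2 => /andP[].
    rewrite HI mem_bigcap in Hu; rewrite HI mem_bigcap in Hv.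
    have := allP Hu e He; have := allP Hv e He.
    by rewrite /= !sub2 Hx Hy /= => -> ->.
  have /andP[Pp Up] := Hp.
  have [s [s' Es]] := infixP Hin.
  have [[r1 [R1 L1 S1]] [r2 [R2 L2 S2]]] := split_simple Up Pp Es.
  have Txy := infix_path Pp Hin.
  pose T' := addE (rmE T x y) u v.
  exists T'; split; last by rewrite /T' /addE !eqxx /= orbT.
  have Cux : connect (rmE T x y) u x by apply/connectP; exists r1.
  have Cvy : connect (rmE T x y) v y.
    rewrite (sym_connect_sym (rm_sym x y sT)); apply/connectP; exists r2 => //.
    by rewrite L2 Hl.
  split; first exact: swap_tree Ht Txy Cux Cvy.
  move=> e He; apply/ic_restr => c d Hc Hd.
  have sT' : symmetric T' := add_sym u v (rm_sym x y sT).
  have CR := proj1 (ic_restr T e) (HTe e He) c d Hc Hd.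
  apply: (connect_sub _ CR) => w z /and3P[Twz Hw Hz].
  case Hr: (rmE T x y w z).
    by apply: connect1; rewrite /restr /T' /addE Hr Hw Hz.
  have [Hxe Hye] : x \in e /\ y \in e.
    move: Hr; rewrite /rmE Twz /= => /negbFE /orP[]/andP[/eqP Ew /eqP Ez];
      by rewrite -Ew -Ez.
  have /andP[Hue Hve] := Hxy e He Hxe Hye.
  have Hsub := host_path_in Ht (HTe e He) Hue Hve Hp Hl.
  have Hm : forall z, z \in u :: p -> z \in e.
    by move=> z'; rewrite inE => /orP[/eqP->|/Hsub].
  have subR : {in (fun z => z \in e) &, subrel (rmE T x y) (restr T' e)}.
    by move=> a b Ha Hb Hab; rewrite /restr /T' /addE Hab Ha Hb.
  have C1 : connect (restr T' e) u x.
    apply/connectP; exists r1; last by rewrite L1.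
    apply: (@sub_in_path _ (fun z => z \in e) (rmE T x y)) R1 => //.
    by apply/allP => z' Hz'; exact: Hm (S1 _ Hz').
  have C2 : connect (restr T' e) y v.
    apply/connectP; exists r2; last by rewrite L2 Hl.
    apply: (@sub_in_path _ (fun z => z \in e) (rmE T x y)) R2 => //.
    by apply/allP => z' Hz'; exact: Hm (S2 _ Hz').
  have C3 : restr T' e u v by rewrite /restr Hue Hve /T' /addE !eqxx /= ?orbT.
  have csR := sym_connect_sym (restr_sym e sT').
  have Cxy : connect (restr T' e) x y.
    have Cxu : connect (restr T' e) x u by rewrite csR.
    have Cvy' : connect (restr T' e) v y by rewrite csR.
    exact: connect_trans Cxu (connect_trans (connect1 C3) Cvy').
  move: Hr; rewrite /rmE Twz /= => /negbFE /orP[]/andP[/eqP -> /eqP ->] //.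
  by rewrite csR.
Qed.
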